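(* Let $T$ be a reduced linear trellis of length $n$, let $\boldsymbol{\alpha}^1,\dots,\boldsymbol{\alpha}^r\in\mathbb{F}^n$ and let $(a_1,l_1),\dots,(a_r,l_r)$ be spans with $0\le l_i\le n$. Then $T\simeq\bigotimes_{i=1}^r\boldsymbol{\alpha}^i|(a_i,l_i)$ if and only if there exist $\mathbf{v}^1,\dots,\mathbf{v}^r\in\prod_iV_i(T)$ such that $\{(\mathbf{v}^i,\boldsymbol{\alpha}^i)\}_{i=1,\dots,r}$ is a product basis of $T$ and each cycle $(\mathbf{v}^i,\boldsymbol{\alpha}^i)$ has minimum span $(a_i,l_i)$.
   Context: Let $\mathbb{F}$ be a finite field and $n\ge1$; indices are taken in $\mathbb{Z}_n$. A trellis $T$ of length $n$ over $\mathbb{F}$ consists of pairwise disjoint finite vertex sets $V_i(T)$, $i\in\mathbb{Z}_n$, and edge sets $E_i(T)\subseteq V_i(T)\times\mathbb{F}\times V_{i+1}(T)$; $(v,\alpha,w)\in E_i(T)$ is an edge from $v$ to $w$ with label $\alpha$ at time index $i$. Every trellis is assumed trim (each vertex has an outgoing and an incoming edge). $T$ is linear if every $V_i(T)$ is an $\mathbb{F}$-vector space and every $E_i(T)$ a subspace. A cycle is a closed path $v_0\alpha_0v_1\cdots\alpha_{n-1}v_n$, $v_n=v_0\in V_0(T)$, of length $n$, identified with $(\mathbf{v},\boldsymbol{\alpha})\in\prod_{i}V_i(T)\times\mathbb{F}^n$; $\mathbb{S}(T)$ is the set of cycles. $T$ is reduced if every edge lies on some cycle. Isomorphisms: for trellises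 of the same length, an isomorphism $f:T\to T'$ is a family of bijections $f_i:V_i(T)\to V_i(T')$ with $(v,\alpha,w)\in E_i(T)\iff(f_i(v),\alpha,f_{i+1}(w))\in E_i(T')$; if $T,T'$ are linear and all $f_i$ linear, $f$ is a linear isomorphism, written $T\simeq T'$. Spans: for $a\in\mathbb{Z}_n$, $0\le l\le n-1$, $[a,a+l]=\{a,\dots,a+l\}\subseteq\mathbb{Z}_n$, $(a,a+l]=[a,a+l]\setminus\{a\}$; the pair $(a,l)$ is a span; degenerate spans are $\emptyset$ (length $-1$) and $\mathbb{Z}_n$ (length $n$, written $(a,n)$). Partial order: $(a_1,l_1)\le(a_2,l_2)$ iff ($l_1\le l_2<n-1$ and $[a_1,a_1+l_1]\subseteq[a_2,a_2+l_2]$) or ($l_2=n-1$ and $(a_1,a_1+l_1]\subseteq(a_2,a_2+l_2]$) or $l_1=-1$ or $l_2=n$. A vector $\boldsymbol{\alpha}\in\mathbb{F}^n$ has span $(a,l)$ ($0\le l\le n-1$) if its support lies in $[a,a+l]$; $\mathbb{Z}_n$ is a span of every vector. A nondegenerate $(a,l)$ is a span of a cycle $(\mathbf{v},\boldsymbol{\alpha})$ if $\{i:v_i\ne0\}\subseteq(a,a+l]$ and $\{i:\alpha_i\ne0\}\subseteq[a,a+l]$; $\emptyset$ is a span only of the zero cycle, $\mathbb{Z}_n$ of every cycle. The minimum span of a cycle is a span of it that is $\le$ every other span of it (when it exists). $\mathbb{S}_{\mathfrak{s}}(T)$ is the subspace of cycles having span $\mathfrak{s}$. A product basis of $T$ is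 a basis $\mathcal{B}$ of $\mathbb{S}(T)$ such that $\mathcal{B}\cap\mathbb{S}_{\mathfrak{s}}(T)$ spans $\mathbb{S}_{\mathfrak{s}}(T)$ for every span $\mathfrak{s}$. Elementary trellises and products: for $\boldsymbol{\alpha}\in\mathbb{F}^n$ with span $(a,l)$, $0\le l\le n$, the elementary trellis $\boldsymbol{\alpha}|(a,l)$ has $V_i=\mathbb{F}$ for $i\in(a,a+l]$ (for $l=n$ this is all of $\mathbb{Z}_n$), $V_i=0$ otherwise, and $E_i=\langle(u_i,\alpha_i,u_{i+1})\rangle$ where $u_i=1$ if $i\in(a,a+l]$ and $u_i=0$ otherwise. The product $T\otimes T'$ has $V_i=V_i(T)\times V_i(T')$ and $E_i=\{((v,v'),\alpha+\alpha',(w,w')):(v,\alpha,w)\in E_i(T),(v',\alpha',w')\in E_i(T')\}$. Convention: in a product of elementary trellises at most one factor has span $(a,0)$ for each $a\in\mathbb{Z}_n$. *)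

(* Defs.v *)
From HB Require Import structures.
From mathcomp Require Import all_boot all_order all_algebra.
Unset Printing Implicit Defensive.
Import GRing.Theory.
Local Open Scope ring_scope.

(* Time indices are 'I_n with cyclic successor ordS (i.e. Z_n).
   Vertex spaces of linear trellises are represented as F^(d_i) = 'rV[F]_(d_i);
   every finite F-vector space is linearly isomorphic to such a space and all
   notions below are invariant under linear isomorphism. *)
Record trellis (F : finFieldType) (n : nat) := Trellis {
  vdim : 'I_n -> nat;
  edges : forall i : 'I_n,
      {set ('rV[F]_(vdim i) * F * 'rV[F]_(vdim (ordS i)))%type}
}.

Arguments Trellis {F n}.
Arguments vdim {F n}.
Arguments edges {F n}.

Section Trellis.
Variables (F : finFieldType) (n : nat).

(* [a, a+hi] restricted to offsets j with lo <= j <= hi, i.e.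
   ival a 0 l = [a,a+l]  and  ival a 1 l = (a,a+l]  (subsets of Z_n). *)
Definition ival (a : 'I_n) (lo hi : nat) : {set 'I_n} :=
  [set i : 'I_n | [exists j : 'I_hi.+1, (lo <= j)%N && (val i == (a + j) %% n)%N]].

Definition linear_trellis (T : trellis F n) : Prop :=
  forall i : 'I_n,
    (0, 0, 0) \in edges T i /\
    forall (c : F) x1 al1 y1 x2 al2 y2,
      (x1, al1, y1) \in edges T i -> (x2, al2, y2) \in edges T i ->
      (c *: x1 + x2, c * al1 + al2, c *: y1 + y2) \in edges T i.

Definition trim (T : trellis F n) : Prop :=
  (forall (i : 'I_n) (v : 'rV[F]_(vdim T i)),
      exists al w, (v, al, w) \in edges T i) /\
  (forall (i : 'I_n) (w : 'rV[F]_(vdim T (ordS i))),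
      exists v al, (v, al, w) \in edges T i).

Definition is_cycle (T : trellis F n) (v : forall i : 'I_n, 'rV[F]_(vdim T i))
    (al : 'I_n -> F) : Prop :=
  forall i : 'I_n, (v i, al i, v (ordS i)) \in edges T i.

Definition reduced (T : trellis F n) : Prop :=
  forall (i : 'I_n) e, e \in edges T i ->
    exists v al, is_cycle T v al /\ (v i, al i, v (ordS i)) = e.

(* Spans: SpEmpty is the empty span (length -1); Sp a l with l <= n-1 is (a,l);
   Sp a n is the full span Z_n, written (a,n). *)
Inductive span := SpEmpty | Sp of 'I_n & nat.

Definition valid_span (s : span) : bool :=
  if s is Sp _ l then (l <= n)%N else true.

Definition span_le (s1 s2 : span) : bool :=
  match s1, s2 with
  | SpEmpty, _ => true
  | Sp _ _, SpEmpty => false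
  | Sp a1 l1, Sp a2 l2 =>
      [|| [&& (l1 <= l2)%N, (l2 < n.-1)%N & ival a1 0 l1 \subset ival a2 0 l2],
          (l2 == n.-1) && (ival a1 1 l1 \subset ival a2 1 l2)
        | l2 == n]
  end.

Definition vec_has_span (al : 'I_n -> F) (a : 'I_n) (l : nat) : Prop :=
  if (n <= l)%N then True
  else forall i, al i != 0 -> i \in ival a 0 l.

Definition cycle_has_span (T : trellis F n) (s : span)
    (v : forall i : 'I_n, 'rV[F]_(vdim T i)) (al : 'I_n -> F) : Prop :=
  match s with
  | SpEmpty => (forall i, v i = 0) /\ (forall i, al i = 0)
  | Sp a l =>
      if (n <= l)%N then True
      else (forall i, v i != 0 -> i \in ival a 1 l) /\
           (forall i, al i != 0 -> i \in ival a 0 l)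
  end.

Definition has_min_span (T : trellis F n) (v : forall i : 'I_n, 'rV[F]_(vdim T i))
    (al : 'I_n -> F) (s : span) : Prop :=
  cycle_has_span T s v al /\
  forall s', valid_span s' -> cycle_has_span T s' v al -> span_le s s'.

Definition comb_st (T : trellis F n) (r : nat)
    (vs : 'I_r -> forall i : 'I_n, 'rV[F]_(vdim T i)) (k : 'I_r -> F) :
    forall i : 'I_n, 'rV[F]_(vdim T i) :=
  fun i => \sum_(j < r) k j *: vs j i.

Definition comb_lab (r : nat) (als : 'I_r -> 'I_n -> F) (k : 'I_r -> F) :
    'I_n -> F :=
  fun i => \sum_(j < r) k j * als j i.

Definition product_basis (T : trellis F n) (r : nat)
    (vs : 'I_r -> forall i : 'I_n, 'rV[F]_(vdim T i)) (als : 'I_r -> 'I_n -> F) :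
    Prop :=
  (forall j, is_cycle T (vs j) (als j)) /\
  (forall k : 'I_r -> F,
      (forall i, comb_st T r vs k i = 0) -> (forall i, comb_lab r als k i = 0) ->
      forall j, k j = 0) /\
  (forall v al, is_cycle T v al ->
      exists k, (forall i, v i = comb_st T r vs k i) /\ (forall i, al i = comb_lab r als k i)) /\
  (* B ∩ S_s spans S_s for every span s *)
  (forall s, valid_span s -> forall v al, is_cycle T v al -> cycle_has_span T s v al ->
      exists k : 'I_r -> F,
        (forall j, k j != 0 -> cycle_has_span T s (vs j) (als j)) /\
        (forall i, v i = comb_st T r vs k i) /\ (forall i, al i = comb_lab r als k i)).

Definition trellis_iso (T T' : trellis F n) : Prop :=
  exists f : forall i : 'I_n, 'rV[F]_(vdim T i) -> 'rV[F]_(vdim T' i),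
    (forall i (c : F) x y, f i (c *: x + y) = c *: f i x + f i y) /\
    (forall i, bijective (f i)) /\
    (forall i x al y,
        ((x, al, y) \in edges T i) = ((f i x, al, f (ordS i) y) \in edges T' i)).

(* product of trellises; V_i(T) x V_i(T') is represented as 'rV_(d_i + d'_i) *)
Definition trellis_prod (T1 T2 : trellis F n) : trellis F n :=
  Trellis (fun i => (vdim T1 i + vdim T2 i)%N)
    (fun i => [set (row_mx e1.1.1 e2.1.1, e1.1.2 + e2.1.2, row_mx e1.2 e2.2)
               | e1 in edges T1 i, e2 in edges T2 i]).

Definition trivial_trellis : trellis F n :=
  Trellis (fun _ => 0%N) (fun i => [set (0, 0, 0)]).

Definition elem_dim (a : 'I_n) (l : nat) (i : 'I_n) : nat :=
  if i \in ival a 1 l then 1%N else 0%N.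

Definition elem_trellis (al : 'I_n -> F) (a : 'I_n) (l : nat) : trellis F n :=
  Trellis (elem_dim a l)
    (fun i => [set ((c *: const_mx 1 : 'rV[F]_(elem_dim a l i)), c * al i,
                    (c *: const_mx 1 : 'rV[F]_(elem_dim a l (ordS i)))) | c : F]).

Definition elem_product (r : nat) (als : 'I_r -> 'I_n -> F) (a : 'I_r -> 'I_n)
    (l : 'I_r -> nat) : trellis F n :=
  foldr (fun j T => trellis_prod (elem_trellis (als j) (a j) (l j)) T)
        trivial_trellis (enum 'I_r).

End Trellis.

Arguments ival {n}.
Arguments linear_trellis {F n}.
Arguments trim {F n}.
Arguments is_cycle {F n}.
Arguments reduced {F n}.
Arguments SpEmpty {n}.
Arguments Sp {n}.
Arguments valid_span {n}.
Arguments span_le {n}.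
Arguments vec_has_span {F n}.
Arguments cycle_has_span {F n}.
Arguments has_min_span {F n}.
Arguments comb_st {F n} T {r}.
Arguments comb_lab {F n r}.
Arguments product_basis {F n} T {r}.
Arguments trellis_iso {F n}.
Arguments trellis_prod {F n}.
Arguments trivial_trellis {F n}.
Arguments elem_dim {n}.
Arguments elem_trellis {F n}.
Arguments elem_product {F n r}.

(* Main.v *)
Require Import Defs.
From HB Require Import structures.
From mathcomp Require Import all_boot all_order all_algebra .
From mathcomp Require Import zify.
From Stdlib Require Import ClassicalEpsilon.
Import GRing.Theory.
Local Open Scope ring_scope.
Set Implicit Arguments.
Unset Strict Implicit.

Local Close Scope ring_scope.
Lemma mod2 (N x : nat) : (x < N + N)%N ->
  (x %% N = x /\ x < N)%N \/ (x %% N = x - N /\ N <= x)%N.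
Proof.
case: (ltnP x N) => h; first by left; rewrite modn_small.
move=> h2; right; split => //.
by rewrite -{1}(subnK h) modnDr modn_small //; lia.
Qed.

Definition pt (n : nat) (a : 'I_n.+1) (s : nat) : 'I_n.+1 := inord ((a + s) %% n.+1).
Definition off (n : nat) (a i : 'I_n.+1) : nat := (i + n.+1 - a) %% n.+1.
Arguments pt {n}.
Arguments off {n}.

Lemma ptE n (a : 'I_n.+1) s : nat_of_ord (pt a s) = ((a + s) %% n.+1)%N.
Proof. by rewrite /pt inordK // ltn_pmod. Qed.

Lemma off_lt n (a i : 'I_n.+1) : (off a i < n.+1)%N.
Proof. by rewrite /off ltn_pmod. Qed.

Lemma pt_off n (a i : 'I_n.+1) : pt a (off a i) = i.
Proof.
apply: val_inj => /=; rewrite ptE /off modnDmr.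
have ha := ltn_ord a; have hi := ltn_ord i.
have -> : (a + (i + n.+1 - a) = i + n.+1)%N by lia.
by rewrite modnDr modn_small.
Qed.

Lemma off_pt n (a : 'I_n.+1) s : (s < n.+1)%N -> off a (pt a s) = s.
Proof.
move=> hs; rewrite /off ptE.
have ha := ltn_ord a.
have [[-> _]|[-> h2]] := @mod2 n.+1 (a + s) ltac:(lia).
  have -> : (a + s + n.+1 - a = s + n.+1)%N by lia.
  by rewrite modnDr modn_small.
have -> : (a + s - n.+1 + n.+1 - a = s)%N by lia.
by rewrite modn_small.
Qed.

Lemma pt_inj n (a : 'I_n.+1) s t : (s < n.+1)%N -> (t < n.+1)%N -> pt a s = pt a t -> s = t.
Proof. by move=> hs ht e; rewrite -(off_pt a hs) -(off_pt a ht) e. Qed.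

Lemma ordS_pt n (a : 'I_n.+1) s : ordS (pt a s) = pt a s.+1.
Proof. by apply: val_inj => /=; rewrite !ptE -[(_ %% _).+1]addn1 modnDml addn1 addnS. Qed.

Lemma pt0 n (a : 'I_n.+1) : pt a 0 = a.
Proof. by apply: val_inj => /=; rewrite ptE addn0 modn_small. Qed.

Lemma ptN n (a : 'I_n.+1) : pt a n.+1 = a.
Proof. by apply: val_inj => /=; rewrite ptE modnDr modn_small. Qed.

Lemma ordS_a n (a : 'I_n.+1) : ordS a = pt a 1.
Proof. by rewrite -{1}(pt0 a) ordS_pt. Qed.

Lemma ivalP n (a i : 'I_n.+1) lo hi :
  reflect (exists j, [/\ lo <= j, j <= hi & i = pt a j]%N) (i \in ival a lo hi).
Proof.
rewrite inE; apply: (iffP existsP) => [[j /andP[h1 /eqP h2]]|[j [h1 h2 ->]]].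
  exists j; split => //; first by rewrite -ltnS.
  by apply: val_inj => /=; rewrite ptE.
have hj : (j < hi.+1)%N by rewrite ltnS.
exists (Ordinal hj); rewrite /= h1 /=; apply/eqP; rewrite ptE //.
Qed.

Lemma ival_small n (a i : 'I_n.+1) lo hi : (hi < n.+1)%N ->
  (i \in ival a lo hi) = (lo <= off a i <= hi)%N.
Proof.
move=> hh; apply/ivalP/idP => [[j [h1 h2 ->]]|/andP[h1 h2]].
  by rewrite off_pt ?h1 ?h2 //; lia.
by exists (off a i); rewrite h1 h2 pt_off.
Qed.

Lemma pt_in n (a : 'I_n.+1) lo hi j : (lo <= j <= hi)%N -> pt a j \in ival a lo hi.
Proof. by move=> /andP[h1 h2]; apply/ivalP; exists j. Qed.

Lemma ival_full n (a i : 'I_n.+1) : i \in ival a 1 n.+1.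
Proof.
apply/ivalP; case: (eqVneq (off a i) 0) => h.
  by exists n.+1; split => //; rewrite ptN -(pt_off a i) h pt0.
exists (off a i); split; [lia | exact: ltnW (off_lt a i) | by rewrite pt_off].
Qed.

Lemma notin_self n (a : 'I_n.+1) m : (m < n.+1)%N -> a \notin ival a 1 m.
Proof.
move=> hm; rewrite ival_small // -{2}(pt0 a) off_pt //.
Qed.

Lemma in_all_but n (i t : 'I_n.+1) : t != i -> t \in ival i 1 n.
Proof.
move=> h; rewrite ival_small //; have := off_lt i t.
case: (eqVneq (off i t) 0) => e; last by lia.
by move: h; rewrite -(pt_off i t) e pt0 eqxx.
Qed.

Lemma in_all n (i t : 'I_n.+1) : t \in ival i 0 n.
Proof. by rewrite ival_small //; have := off_lt i t; lia. Qed.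

Lemma ival10 n (a i : 'I_n.+1) : i \notin ival a 1 0.
Proof. by rewrite ival_small //; lia. Qed.

Lemma ival00 n (a i : 'I_n.+1) : i \in ival a 0 0 -> i = a.
Proof. by rewrite ival_small // leqn0 => /eqP e; rewrite -(pt_off a i) e pt0. Qed.

Lemma ival_01 n (a i : 'I_n.+1) l : (1 <= l)%N ->
  i \in ival a 0 l -> i \in ival a 1 l \/ ordS i \in ival a 1 l.
Proof.
move=> hl /ivalP[j [_ h2 ->]]; case: (eqVneq j 0) => e.
  by right; rewrite e pt0 ordS_a; apply: pt_in; rewrite hl.
by left; apply: pt_in; rewrite h2; lia.
Qed.

Lemma ival10_sub n (a i : 'I_n.+1) l : i \in ival a 1 l -> i \in ival a 0 l.
Proof. by move=> /ivalP[j [h1 h2 ->]]; apply: pt_in; rewrite h2. Qed.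

Lemma ival_pred n (b i : 'I_n.+1) m : (m < n.+1)%N ->
  ordS i \in ival b 1 m -> i \in ival b 0 m.
Proof.
move=> hm /ivalP[j [h1 h2 e]].
have : ordS i = ordS (pt b j.-1) by rewrite ordS_pt prednK.
move/ordS_inj ->; apply: pt_in; lia.
Qed.

Lemma off_ptb n (a b : 'I_n.+1) s : off b (pt a s) = ((off b a + s) %% n.+1)%N.
Proof.
rewrite /off ptE; have hb := ltn_ord b.
rewrite -!addnBA; try lia.
by rewrite modnDml modnDml addnAC.
Qed.

Lemma span_shrink n (a b : 'I_n.+1) l m : (1 <= l)%N -> (l < n.+1)%N -> (m < n)%N ->
  (forall i, i \in ival a 1 l -> i \in ival b 1 m) ->
  (l <= m)%N /\ (forall i, i \in ival a 0 l -> i \in ival b 0 m).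
Proof.
move=> h1 h2 h3 H.
have Hs : forall s, (1 <= s <= l)%N -> (1 <= (off b a + s) %% n.+1 <= m)%N.
  move=> s hs; have := H (pt a s) (pt_in a hs).
  by rewrite ival_small ?off_ptb //; lia.
have hc := off_lt b a; set c := off b a in Hs hc *.
have hcl : (c + l < n.+1)%N.
  case: (ltnP (c + l) n.+1) => // hge.
  have := Hs (n.+1 - c) ltac:(lia).
  have e : (c + (n.+1 - c) = n.+1)%N by lia.
  by rewrite e modnn.
have := Hs l ltac:(lia); rewrite modn_small // => hl.
split; first by lia.
move=> i; rewrite !ival_small //; try lia.
move=> /andP[_ hi]; have := off_lt a i => ho.
rewrite -(pt_off a i) off_ptb -/c modn_small; lia.

Qed.


Local Open Scope ring_scope.
Definition Pl (F : finFieldType) n r (alpha : 'I_r -> 'I_n -> F) (a : 'I_r -> 'I_n)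
  (l : 'I_r -> nat) (s : seq 'I_r) : trellis F n :=
  foldr (fun j T => trellis_prod (elem_trellis (alpha j) (a j) (l j)) T) trivial_trellis s.

Fixpoint vertP (F : finFieldType) n r (alpha : 'I_r -> 'I_n -> F) (a : 'I_r -> 'I_n)
  (l : 'I_r -> nat) (s : seq 'I_r) (i : 'I_n) (k : 'I_r -> F) :
   'rV[F]_(vdim (Pl alpha a l s) i) :=
  match s return 'rV[F]_(vdim (Pl alpha a l s) i) with
  | [::] => 0
  | j :: s' => row_mx ((k j) *: const_mx 1 : 'rV[F]_(elem_dim (a j) (l j) i))
                      (vertP alpha a l s' i k)
  end.

Lemma SC (F : finFieldType) (b : bool) (c c' : F) :
  ((c *: const_mx 1 : 'rV[F]_(if b then 1 else 0)%N) = c' *: const_mx 1) <-> (b -> c = c').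
Proof.
case: b => /=; split => //.
- move=> /matrixP /(_ 0 0); rewrite !mxE !mulr1 => -> //.
- by move=> ->.
- by move=> _; rewrite !thinmx0.
Qed.

Lemma SS (F : finFieldType) (b : bool) (y : 'rV[F]_(if b then 1 else 0)%N) :
  exists c : F, y = c *: const_mx 1.
Proof.
case: b y => /= y; last by exists 0; rewrite !thinmx0.
exists (y 0 0); apply/matrixP => i j; rewrite !mxE !ord1 mulr1 //.
Qed.

Lemma vertP_eqP (F : finFieldType) n r (alpha : 'I_r -> 'I_n -> F) a l s i k k' :
  vertP alpha a l s i k = vertP alpha a l s i k' <->
  (forall j, j \in s -> i \in ival (a j) 1 (l j) -> k j = k' j).
Proof.
elim: s => [|j s IH] /=; first by split.
split.
  move=> /eq_row_mx [/SC h1 /IH h2] j'; rewrite inE => /orP[/eqP ->|js] //.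
  exact: h2.
move=> H; congr row_mx; last by apply/IH => j' js; apply: H; rewrite inE js orbT.
apply/(SC (i \in ival (a j) 1 (l j))) => hi; apply: H; [by rewrite inE eqxx | exact: hi].
Qed.

Lemma vertP_lin (F : finFieldType) n r (alpha : 'I_r -> 'I_n -> F) a l s i (c : F) k k' :
  vertP alpha a l s i (fun j => c * k j + k' j) =
  c *: vertP alpha a l s i k + vertP alpha a l s i k'.
Proof.
elim: s => [|j s IH] /=; first by rewrite scaler0 addr0.
by rewrite IH scale_row_mx add_row_mx scalerA scalerDl.
Qed.

Lemma vertP0 (F : finFieldType) n r (alpha : 'I_r -> 'I_n -> F) a l s i :
  vertP alpha a l s i (fun _ => 0) = 0.
Proof.
elim: s => [|j s IH] //=; by rewrite IH scale0r row_mx0.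
Qed.

Lemma edge_of_k (F : finFieldType) n r (alpha : 'I_r -> 'I_n -> F) a l s i k :
  (vertP alpha a l s i k, \sum_(j <- s) k j * alpha j i, vertP alpha a l s (ordS i) k)
    \in edges (Pl alpha a l s) i.
Proof.
elim: s => [|j s IH] /=; first by rewrite big_nil inE.
rewrite big_cons; apply/imset2P.
pose e1 := ((k j *: const_mx 1 : 'rV[F]_(elem_dim (a j) (l j) i)), k j * alpha j i,
        (k j *: const_mx 1 : 'rV[F]_(elem_dim (a j) (l j) (ordS i)))).
pose e2 := (vertP alpha a l s i k, \sum_(j <- s) k j * alpha j i, vertP alpha a l s (ordS i) k).
apply: (Imset2spec (x1 := e1) (x2 := e2)) => //.
by apply/imsetP; exists (k j).
Qed.

Lemma k_of_edge (F : finFieldType) n r (alpha : 'I_r -> 'I_n -> F) a l s i x al y :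
  uniq s -> (x, al, y) \in edges (Pl alpha a l s) i ->
  exists k, [/\ x = vertP alpha a l s i k, y = vertP alpha a l s (ordS i) k &
                al = \sum_(j <- s) k j * alpha j i].
Proof.
elim: s x al y => [|j s IH] x al y /=.
  by move=> _; rewrite inE => /eqP [-> -> ->]; exists (fun _ => 0); rewrite big_nil.
move=> /andP[js us] /imset2P [[[x1 al1] y1] [[x2 al2] y2] e1 e2 [-> -> ->]].
move: e1 => /imsetP [c _ [-> -> ->]].
have [k [-> -> ->]] := IH _ _ _ us e2.
exists (fun j' => if j' == j then c else k j').
have E : forall i', vertP alpha a l s i' k =
    vertP alpha a l s i' (fun j' => if j' == j then c else k j').
  move=> i'; apply/vertP_eqP => j' j's _.
  by case: eqP => // e; move: js; rewrite -e j's.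
rewrite /= eqxx !E big_cons eqxx; split => //; congr (_ + _).
apply: eq_big_seq => j' j's; case: eqP => // e; move: js; by rewrite -e j's.
Qed.

Lemma surj_vertP (F : finFieldType) n r (alpha : 'I_r -> 'I_n -> F) a l s i y :
  uniq s -> exists k, y = vertP alpha a l s i k.
Proof.
elim: s y => [|j s IH] y /=; first by move=> _; exists (fun _ => 0); rewrite thinmx0.
move=> /andP[js us]; rewrite -(hsubmxK y).
have [c ->] := SS (lsubmx y).
have [k ->] := IH (rsubmx y) us.
exists (fun j' => if j' == j then c else k j').
rewrite eqxx; congr row_mx; apply/vertP_eqP => j' j's _.
by case: eqP => // e; move: js; rewrite -e j's.
Qed.


Lemma labE (F : finFieldType) r (f : 'I_r -> F) :
  \sum_(j <- enum 'I_r) f j = \sum_(j < r) f j.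
Proof. by rewrite enumT. Qed.

Lemma active_step (F : finFieldType) n r (alpha : 'I_r -> 'I_n.+1 -> F) a l w al
  (K : 'I_n.+1 -> 'I_r -> F) :
  (forall i, [/\ w i = vertP alpha a l (enum 'I_r) i (K i),
                 w (ordS i) = vertP alpha a l (enum 'I_r) (ordS i) (K i) &
                 al i = \sum_(j <- enum 'I_r) K i j * alpha j i]) ->
  forall j t, ordS t \in ival (a j) 1 (l j) -> K t j = K (ordS t) j.
Proof.
move=> HK j t ht.
have [_ e1 _] := HK t; have [e2 _ _] := HK (ordS t).
by move: e1; rewrite e2 => /esym /vertP_eqP /(_ j (mem_enum _ _) ht).
Qed.

Lemma P_cycle (F : finFieldType) n r (alpha : 'I_r -> 'I_n.+1 -> F) a l w al :
  (forall j, (l j <= n.+1)%N) ->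
  (forall j, vec_has_span (alpha j) (a j) (l j)) ->
  is_cycle (elem_product alpha a l) w al ->
  exists k, (forall i, w i = vertP alpha a l (enum 'I_r) i k) /\
            (forall i, al i = comb_lab alpha k i).
Proof.
move=> hl hv hc.
have hE : forall i, exists k, [/\ w i = vertP alpha a l (enum 'I_r) i k,
                 w (ordS i) = vertP alpha a l (enum 'I_r) (ordS i) k &
                 al i = \sum_(j <- enum 'I_r) k j * alpha j i].
  by move=> i; apply: k_of_edge; [exact: enum_uniq | exact: hc i].
pose K i := proj1_sig (constructive_indefinite_description _ (hE i)).
have HK : forall i, [/\ w i = vertP alpha a l (enum 'I_r) i (K i),
                 w (ordS i) = vertP alpha a l (enum 'I_r) (ordS i) (K i) &
                 al i = \sum_(j <- enum 'I_r) K i j * alpha j i].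
  by move=> i; rewrite /K; case: constructive_indefinite_description.
have X := active_step HK.
pose kk j := K (a j) j.
have Q : forall j s, (1 <= s <= l j)%N -> K (pt (a j) s) j = kk j.
  move=> j; elim=> [//|s IH] /andP[h1 h2].
  case: (eqVneq s 0) => [->|s0].
    rewrite -ordS_a -X //; rewrite ordS_a; apply: pt_in; lia.
  rewrite -ordS_pt -X; first by apply: IH; lia.
  by rewrite ordS_pt; apply: pt_in; lia.
have Y : forall j t, t \in ival (a j) 1 (l j) -> K t j = kk j.
  by move=> j t /ivalP [s [h1 h2 ->]]; apply: Q; rewrite h1 h2.
exists kk; split.
  move=> i; have [-> _ _] := HK i; apply/vertP_eqP => j _; exact: Y.
move=> i; have [_ _ ->] := HK i; rewrite labE; apply: eq_bigr => j _.
case: (eqVneq (alpha j i) 0) => [->|ne]; first by rewrite !mulr0.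
congr (_ * _); have := hv j; rewrite /vec_has_span.
case: (eqVneq (l j) 0) => [e0|ne0].
  rewrite e0 /= => /(_ i ne) /ival00 ->; by [].
case: ifP => hn.
  move=> _; apply: Y; have -> : l j = n.+1 by have := hl j; lia.
  exact: ival_full.
move=> /(_ i ne) /ival_01 []; first by lia.
  move=> h.
  exact: Y.
move=> h; rewrite X //; exact: Y.
Qed.


Lemma comb_lin (F : finFieldType) n (T : trellis F n) r (vs : 'I_r -> forall i, 'rV[F]_(vdim T i))
   (c : F) k k' i :
  comb_st T vs (fun j => c * k j + k' j) i = c *: comb_st T vs k i + comb_st T vs k' i.
Proof.
rewrite /comb_st scaler_sumr -big_split /=; apply: eq_bigr => j _.
by rewrite scalerDl scalerA.
Qed.

Lemma comb_sub (F : finFieldType) n (T : trellis F n) r (vs : 'I_r -> forall i, 'rV[F]_(vdim T i))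
   k k' i :
  comb_st T vs (fun j => k j - k' j) i = comb_st T vs k i - comb_st T vs k' i.
Proof.
rewrite /comb_st -sumrB; apply: eq_bigr => j _; by rewrite scalerBl.
Qed.

Lemma lab_sub (F : finFieldType) n r (als : 'I_r -> 'I_n -> F) k k' i :
  comb_lab als (fun j => k j - k' j) i = comb_lab als k i - comb_lab als k' i.
Proof.
rewrite /comb_lab -sumrB; apply: eq_bigr => j _; by rewrite mulrBl.
Qed.

Lemma LinCyc (F : finFieldType) n (T : trellis F n) r (vs : 'I_r -> forall i, 'rV[F]_(vdim T i))
   (als : 'I_r -> 'I_n -> F) k :
  linear_trellis T -> (forall j, is_cycle T (vs j) (als j)) ->
  is_cycle T (comb_st T vs k) (comb_lab als k).
Proof.
move=> hlin hc i; rewrite /comb_st /comb_lab.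
have [h0 hcl] := hlin i.
apply: (big_rec3 (fun x y z => (x, y, z) \in edges T i)) => // j x y z _ h.
exact: hcl (hc j i) h.
Qed.

Lemma backward (F : finFieldType) n (T : trellis F n.+1) r
    (alpha : 'I_r -> 'I_n.+1 -> F) (a : 'I_r -> 'I_n.+1) (l : 'I_r -> nat)
    (vs : 'I_r -> forall i, 'rV[F]_(vdim T i)) :
  linear_trellis T -> trim T -> reduced T ->
  (forall j, (l j <= n.+1)%N) ->
  product_basis T vs alpha ->
  (forall j, has_min_span T (vs j) (alpha j) (Sp (a j) (l j))) ->
  trellis_iso T (elem_product alpha a l).
Proof.
move=> hlin htrim hred hl [hcyc [hind [hspan hsp]]] hmin.
pose V i k := vertP alpha a l (enum 'I_r) i k.
pose g i k := comb_st T vs k i.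
have inact : forall j i, i \notin ival (a j) 1 (l j) -> vs j i = 0.
  move=> j i hi; have [h1 _] := hmin j; move: h1; rewrite /cycle_has_span.
  case: ifP => hn.
    move=> _; have e : l j = n.+1 by have := hl j; lia.
    by move: hi; rewrite e ival_full.
  move=> [h1 _]; apply/eqP; apply: contraNT hi; exact: h1.
have Inj : forall i k, g i k = 0 -> forall j, i \in ival (a j) 1 (l j) -> k j = 0.
  move=> i k hk j hj.
  have hc := LinCyc k hlin hcyc.
  have hs : cycle_has_span T (Sp i n) (comb_st T vs k) (comb_lab alpha k).
    rewrite /cycle_has_span ifF; last by lia.
    split => t ht; last exact: in_all.
    apply: in_all_but; apply: contraNneq ht => ->; exact/eqP.
  have [k' [hk'1 [hk'2 hk'3]]] := hsp (Sp i n) ltac:(rewrite /=; lia) _ _ hc hs.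
  have ekk : forall j, k j = k' j.
    move=> j'; apply/eqP; rewrite -subr_eq0; apply/eqP; move: j'; apply: hind.
      by move=> t; rewrite comb_sub -hk'2 subrr.
    by move=> t; rewrite lab_sub -hk'3 subrr.
  apply/eqP; apply: contraT => hkj; rewrite ekk in hkj.
  have [_ hm] := hmin j.
  have := hm (Sp i n) ltac:(rewrite /=; lia) (hk'1 j hkj).
  rewrite /span_le /= ltnn andbF /= eqxx /=.
  have -> : (n == n.+1) = false by lia.
  rewrite orbF => /subsetP /(_ i hj); by rewrite (negPf (notin_self i (ltnSn n))).
have Vg : forall i k k', (forall j, i \in ival (a j) 1 (l j) -> k j = k' j) -> g i k = g i k'.
  move=> i k k' h; rewrite /g /comb_st; apply: eq_bigr => j _.
  by case: (boolP (i \in ival (a j) 1 (l j))) => hj; [rewrite h | rewrite inact // !scaler0].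
have gV : forall i k k', g i k = g i k' -> forall j, i \in ival (a j) 1 (l j) -> k j = k' j.
  move=> i k k' e j hj; apply/eqP; rewrite -subr_eq0; apply/eqP.
  by apply: (Inj i (fun j => k j - k' j)) => //; rewrite /g comb_sub -/(g i k) e subrr.
have VgE : forall i k k', V i k = V i k' <-> g i k = g i k'.
  move=> i k k'; split.
    by move=> /vertP_eqP h; apply: Vg => j; apply: h; exact: mem_enum.
  by move=> /gV h; apply/vertP_eqP => j _; apply: h.
have ExT : forall i x, exists k, g i k = x.
  move=> i x; have [h1 _] := htrim; have [al [w hx]] := h1 i x.
  have [v [al' [hc he]]] := hred i _ hx.
  have [k [hk _]] := hspan _ _ hc.
  by exists k; rewrite /g -hk; case: he.
have ExP : forall i y, exists k, V i k = y.
  by move=> i y; have [k ->] := surj_vertP y (enum_uniq 'I_r); exists k.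
pose kT i x := proj1_sig (constructive_indefinite_description _ (ExT i x)).
pose kP i y := proj1_sig (constructive_indefinite_description _ (ExP i y)).
have kTE : forall i x, g i (kT i x) = x.
  by move=> i x; rewrite /kT; case: constructive_indefinite_description.
have kPE : forall i y, V i (kP i y) = y.
  by move=> i y; rewrite /kP; case: constructive_indefinite_description.
have fE : forall i k, V i (kT i (g i k)) = V i k.
  by move=> i k; apply/VgE; rewrite kTE.
exists (fun i x => V i (kT i x)); split; [|split].
- move=> i c x y; rewrite -vertP_lin; apply/VgE.
  by rewrite kTE /g comb_lin -!/(g _ _) !kTE.
- move=> i; exists (fun y => g i (kP i y)).
    by move=> x /=; rewrite -[RHS](kTE i x); apply/VgE; rewrite kPE.
  by move=> y /=; rewrite fE kPE.
- move=> i x al y; apply/idP/idP.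
    move=> hx; have [v [al' [hc he]]] := hred i _ hx.
    have [k [hk hk2]] := hspan _ _ hc.
    case: he => ex eal ey.
    rewrite -ex -eal -ey !hk hk2 -/(g i k) -/(g (ordS i) k) !fE /comb_lab -labE.
    exact: edge_of_k.
  move=> /(k_of_edge (enum_uniq 'I_r)) [k [e1 e2 e3]].
  have hc := LinCyc k hlin hcyc i.
  have ex : x = g i k by rewrite -(kTE i x); apply/VgE.
  have ey : y = g (ordS i) k by rewrite -(kTE (ordS i) y); apply/VgE.
  by rewrite ex ey e3 labE.
Qed.


Lemma forward (F : finFieldType) n (T : trellis F n.+1) r
    (alpha : 'I_r -> 'I_n.+1 -> F) (a : 'I_r -> 'I_n.+1) (l : 'I_r -> nat) :
  (forall j, (l j <= n.+1)%N) ->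
  (forall j, vec_has_span (alpha j) (a j) (l j)) ->
  (forall j1 j2, j1 != j2 -> l j1 = 0%N -> l j2 = 0%N -> a j1 != a j2) ->
  (forall j, l j = 0%N -> alpha j (a j) != 0) ->
  trellis_iso T (elem_product alpha a l) ->
  exists vs : 'I_r -> forall i : 'I_n.+1, 'rV[F]_(vdim T i),
     product_basis T vs alpha /\
     forall j, has_min_span T (vs j) (alpha j) (Sp (a j) (l j)).
Proof.
move=> hl hv hconv hnz [f [flin [fbij fedge]]].
pose V i k := vertP alpha a l (enum 'I_r) i k.
have hEx : forall i, exists g, cancel (f i) g /\ cancel g (f i).
  by move=> i; case: (fbij i) => g h1 h2; exists g.
pose fi i := proj1_sig (constructive_indefinite_description _ (hEx i)).
have fiK : forall i, cancel (f i) (fi i) /\ cancel (fi i) (f i).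
  by move=> i; rewrite /fi; case: constructive_indefinite_description.
have f0 : forall i, f i 0 = 0.
  move=> i; have := flin i 1 0 0; rewrite !scale1r addr0 => e.
  by apply: (@addrI _ (f i 0)); rewrite addr0 -e.
have fi0 : forall i, fi i 0 = 0.
  by move=> i; rewrite -(f0 i) (proj1 (fiK i)).
have finj : forall i, injective (f i) by move=> i; apply: (can_inj (proj1 (fiK i))).
have fiinj : forall i, injective (fi i) by move=> i; apply: (can_inj (proj2 (fiK i))).
pose d (j : 'I_r) := fun j' : 'I_r => if j' == j then (1 : F) else 0.
pose vs j i := fi i (V i (d j)).
have sumd : forall (k : 'I_r -> F) j', \sum_(j < r) k j * d j j' = k j'.
  move=> k j'; rewrite (bigD1 j') //= /d eqxx mulr1 big1 ?addr0 //.
  by move=> j hj; rewrite eq_sym (negPf hj) mulr0.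
have labd : forall j i, comb_lab alpha (d j) i = alpha j i.
  move=> j i; rewrite /comb_lab (bigD1 j) //= /d eqxx mul1r big1 ?addr0 //.
  by move=> j' hj; rewrite (negPf hj) mul0r.
have Vsum : forall (t : seq 'I_r) (k : 'I_r -> F) i,
    \sum_(j <- t) k j *: V i (d j) = V i (fun j' => \sum_(j <- t) k j * d j j').
  move=> t k i; elim: t => [|j t IH]; first by rewrite big_nil /V -(vertP0 alpha a l _ i); apply/vertP_eqP => *; rewrite big_nil.
  rewrite big_cons IH /V -vertP_lin; apply/vertP_eqP => j' _ _; by rewrite big_cons.
have fsum : forall i k, f i (comb_st T vs k i) = V i k.
  move=> i k; rewrite /comb_st.
  have -> : f i (\sum_(j < r) k j *: vs j i) = \sum_(j < r) k j *: V i (d j).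
    apply: (big_rec2 (fun x y => f i x = y)); first exact: f0.
    by move=> j x y _ <-; rewrite flin /vs (proj2 (fiK i)).
  rewrite Vsum; apply/vertP_eqP => j' _ _; exact: sumd.
have EK : forall i k, (V i k, comb_lab alpha k i, V (ordS i) k) \in edges (elem_product alpha a l) i.
  by move=> i k; rewrite /comb_lab -labE; exact: edge_of_k.
have VZ : forall i k, V i k = 0 -> forall j, i \in ival (a j) 1 (l j) -> k j = 0.
  move=> i k; rewrite /V -(vertP0 alpha a l _ i) => /vertP_eqP h j hj.
  exact: h (mem_enum _ _) hj.
have vsNZ : forall j i, (vs j i != 0) = (i \in ival (a j) 1 (l j)).
  move=> j i; apply/idP/idP.
    apply: contraR => hi; rewrite /vs.
    have -> : V i (d j) = 0.
      by rewrite /V -(vertP0 alpha a l _ i); apply/vertP_eqP => j' _ hj'; rewrite /d; case: eqP => // e; move: hi; rewrite -e hj'.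
    by rewrite fi0.
  move=> hi; apply/eqP; rewrite /vs -(fi0 i) => /fiinj /(VZ i) /(_ j hi).
  by rewrite /d eqxx; apply/eqP; exact: oner_neq0.
have hcyc : forall j, is_cycle T (vs j) (alpha j).
  move=> j i; rewrite fedge /vs !(proj2 (fiK _)) -(labd j i); exact: EK.
have decomp : forall v al, is_cycle T v al ->
    exists k, [/\ forall i, v i = comb_st T vs k i, forall i, al i = comb_lab alpha k i &
               forall i, f i (v i) = V i k].
  move=> v al hc.
  have hc' : is_cycle (elem_product alpha a l) (fun i => f i (v i)) al.
    by move=> i; rewrite -fedge; exact: hc i.
  have [k [h1 h2]] := P_cycle hl hv hc'.
  exists k; split => // i; apply: (finj i); rewrite fsum; exact: h1.
have act1 : forall j, (1 <= l j)%N -> ordS (a j) \in ival (a j) 1 (l j).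
  by move=> j hj; rewrite ordS_a; apply: pt_in; rewrite hj.
have alpha00 : forall j j', j' != j -> l j = 0%N -> l j' = 0%N -> alpha j' (a j) = 0.
  move=> j j' ne h0 h0'; apply/eqP; apply: contraT => hne.
  have := hv j'; rewrite /vec_has_span h0' /= => /(_ _ hne) /ival00 e.
  by move: (hconv j' j ne h0' h0); rewrite e eqxx.
have KZ : forall k, (forall i, V i k = 0) -> (forall i, comb_lab alpha k i = 0) -> forall j, k j = 0.
  move=> k hV hL.
  have K1 : forall j, (1 <= l j)%N -> k j = 0 by move=> j hj; exact: VZ (hV _) _ (act1 j hj).
  move=> j; case: (posnP (l j)) => [h0|hpos]; last exact: K1.
  have := hL (a j); rewrite /comb_lab (bigD1 j) //= big1 ?addr0.
    by move/eqP; rewrite mulf_eq0 (negPf (hnz j h0)) orbF => /eqP.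
  move=> j' ne; case: (posnP (l j')) => [h0'|hp]; first by rewrite alpha00 ?mulr0.
  by rewrite K1 ?mul0r.
  exists vs; split; [split; [exact: hcyc|split; [|split]]|].
  - move=> k hk hl0; apply: KZ => // i; by rewrite -fsum hk f0.
  - move=> v al hc; have [k [h1 h2 _]] := decomp v al hc; by exists k.
  - move=> s hs v al hc hsp; have [k [h1 h2 h3]] := decomp v al hc.
    exists k; split => //; move=> j hkj.
    case: s hs hsp => [_ [hv0 hal0]|b m hm].
      exfalso; move/eqP: hkj; apply; apply: KZ.
        by move=> i; rewrite -h3 hv0 f0.
      by move=> i; rewrite -h2 hal0.
    rewrite /cycle_has_span; case: ifP => // hnm [hsv hsl].
    have hm' : (m < n.+1)%N by lia.
    have actv : forall j t, k j != 0 -> t \in ival (a j) 1 (l j) -> t \in ival b 1 m.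
      move=> j0 t hk0 ht; apply: hsv; apply/eqP => e.
      by move/eqP: hk0; apply; apply: (VZ t) ht; rewrite -h3 e f0.
    have labsupp : forall j t, k j != 0 -> (1 <= l j)%N -> alpha j t != 0 -> t \in ival b 0 m.
      move=> j0 t hk0 hl1 hat; have := hv j0; rewrite /vec_has_span; case: ifP => hn.
        move=> _; apply: ival10_sub; apply: actv hk0 _.
        have -> : l j0 = n.+1 by have := hl j0; lia.
        exact: ival_full.
      move=> /(_ t hat) /(ival_01 hl1) [ht|ht].
        by apply: ival10_sub; exact: actv hk0 ht.
      by apply: ival_pred => //; exact: actv hk0 ht.
    split.
      by move=> t; rewrite vsNZ; exact: actv.
    move=> t hat; case: (posnP (l j)) => [h0|hpos]; last exact: (labsupp j t hkj hpos hat).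
    move: (hv j); rewrite /vec_has_span h0 /= => /(_ t hat) /ival00 ->.
    apply: contraT => hout.
    have : al (a j) = 0 by apply/eqP; apply: contraT => hne; move: (hsl _ hne); rewrite (negPf hout).
    rewrite h2 /comb_lab (bigD1 j) //= big1 ?addr0.
      by move/eqP; rewrite mulf_eq0 (negPf hkj) (negPf (hnz j h0)).
    move=> j' ne; case: (eqVneq (k j') 0) => [->|hk']; first by rewrite mul0r.
    case: (posnP (l j')) => [h0'|hp]; first by rewrite alpha00 ?mulr0.
    apply/eqP; rewrite mulf_eq0; apply/orP; right; apply: contraT => hne.
    by move: (labsupp j' (a j) hk' hp hne); rewrite (negPf hout).
- move=> j; split.
  rewrite /cycle_has_span; case: ifP => // hn; split.
    by move=> i; rewrite vsNZ.
  by have := hv j; rewrite /vec_has_span hn.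
case=> [_ [h1 h2]|b m hm].
  case: (posnP (l j)) => [h0|hpos].
    by move: (hnz j h0); rewrite h2 eqxx.
  by move: (act1 j hpos); rewrite -vsNZ h1 eqxx.
rewrite /span_le /=.
case: (eqVneq m n.+1) => [->|hmn]; first by move=> _; rewrite !orbT.
rewrite /cycle_has_span ifF; last by move: hm hmn; rewrite /=; lia.
move=> [hsv hsl].
have hm' : (m < n.+1)%N by move: hm hmn; rewrite /=; lia.
have sub : forall i, i \in ival (a j) 1 (l j) -> i \in ival b 1 m.
  by move=> i; rewrite -vsNZ; exact: hsv.
case: (leqP n.+1 (l j)) => hn.
  have e : l j = n.+1 by have := hl j; lia.
  by move: (sub b); rewrite e ival_full (negPf (notin_self b hm')) => /(_ isT).
case: (posnP (l j)) => [h0|hpos].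
  have haj : a j \in ival b 0 m by apply: hsl; exact: hnz.
  rewrite h0; case: (eqVneq m n) => [->|hmn2].
    by apply/orP; right; apply/orP; left; apply/subsetP => i; rewrite (negPf (ival10 _ _)).
  have hmn3 : (m < n)%N by move/eqP: hmn2; lia.
  apply/orP; left; apply/and3P; split => //.
  by apply/subsetP => i /ival00 ->.
case: (eqVneq m n) => [e|hmn2].
  by apply/orP; right; apply/orP; left; rewrite e /= ?eqxx; apply/subsetP => i /sub; rewrite e.
have hmn3 : (m < n)%N by move/eqP: hmn2; lia.
have [hle hsub] := span_shrink hpos hn hmn3 sub.
by apply/orP; left; apply/and3P; split; [exact: hle | exact: hmn3 | apply/subsetP => i; exact: hsub].
Qed.


Unset Implicit Arguments.
Set Strict Implicit.

Theorem mainTheorem3 (F : finFieldType) (n : nat) (T : trellis F n) (r : nat)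
    (alpha : 'I_r -> 'I_n -> F) (a : 'I_r -> 'I_n) (l : 'I_r -> nat) :
  (0 < n)%N ->
  linear_trellis T -> trim T -> reduced T ->
  (* (a_j, l_j) are spans with 0 <= l_j <= n *)
  (forall j, (l j <= n)%N) ->
  (* alpha^j has span (a_j, l_j), so that alpha^j|(a_j,l_j) is defined *)
  (forall j, vec_has_span (alpha j) (a j) (l j)) ->
  (* convention: at most one factor has span (a,0) for each a *)
  (forall j1 j2, j1 != j2 -> l j1 = 0%N -> l j2 = 0%N -> a j1 != a j2) ->
  (* factors of span (a,0) are nontrivial (see NOTES.md) *)
  (forall j, l j = 0%N -> alpha j (a j) != 0) ->
  (trellis_iso T (elem_product alpha a l) <->
   exists vs : 'I_r -> forall i : 'I_n, 'rV[F]_(vdim T i),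
     product_basis T vs alpha /\
     forall j, has_min_span T (vs j) (alpha j) (Sp (a j) (l j))).
Proof.
case: n T alpha a l => [//|n] T alpha a l _ hlin htrim hred hl hv hconv hnz; split.
  exact: forward.
move=> [vs [hpb hmin]]; exact: backward hlin htrim hred hl hpb hmin.
Qed.
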